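(* There exist two non-isomorphic clique complexes $K$ and $K'$ (with colored vertices) such that the Simplicial Weisfeiler–Leman (SWL) test cannot distinguish $K$ from $K'$, but there is a color-based filtration whose persistence diagrams for $K$ and $K'$ differ.
   Context: An abstract simplicial complex $K$ over a vertex set $V$ is a set of nonempty subsets of $V$ (simplices) closed under taking nonempty subsets; the clique complex of a graph has as simplices all cliques of the graph. Simplices carry colors (attributes). For a simplex $\sigma$, its boundary neighborhood is $\mathcal{B}(\sigma)=\{\tau\subset\sigma:\dim\tau=\dim\sigma-1\}$ and its upper-adjacency neighborhood is $\mathcal{N}_\uparrow(\sigma)=\{\sigma': \dim\sigma'=\dim\sigma,\ \exists\,\delta\in K \text{ with } \sigma\subset\delta,\ \sigma'\subset\delta,\ \dim\delta=\dim\sigma+1\}$. The Simplicial Weisfeiler–Leman test (Bodnar et al.) is the color-refinement procedure that iteratively updates the color of every simplex by hashing its current color together with the multiset of colors of its boundary neighbors and the multiset of (colors of) its upper-adjacent neighbors (including the color of the shared coface); two complexes are distinguished if at some iteration their multisets of simplex colors differ. A color-based filtration is a filtration $\emptyset=K_0\subset K_{\alpha_1}\subset\dots\subset K_{\alpha_n}=K$ induced by a filtering function $f$ applied to colors of simplices (e.g. vertex colors, with each simplex entering at the maximum value of $f$ over its vertices, or edge colors analogously); persistence diagrams record the (birth, death) pairs of homological features (connected components, cycles, etc.) along the filtration. *)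

(* Defs.v *)
From HB Require Import structures.
From mathcomp Require Import all_boot all_order all_algebra.

Set Implicit Arguments.
Unset Strict Implicit.
Unset Printing Implicit Defensive.

Import GRing.Theory.
Local Open Scope ring_scope.

Definition simple_graph (V : finType) (e : rel V) : Prop :=
  symmetric e /\ irreflexive e.

(* Colors produced by the refinement: finite trees (countable, so that an
   injective "hash" into a canonical multiset representation is available). *)
Definition color := GenTree.tree nat.

(* canonical representation of a multiset of colors: sort by pickle *)
Definition msort (s : seq color) : seq color :=
  sort (fun a b : color => (pickle a <= pickle b)%N) s.

Section Complex.
Variables (V : finType) (e : rel V) (c : V -> nat).

Definition is_clique (s : {set V}) : bool :=
  [forall x in s, forall y in s, (x != y) ==> e x y].

Definition simplex (s : {set V}) : bool := (s != set0) && is_clique s.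

Definition simplices : seq {set V} := enum [pred s : {set V} | simplex s].

Definition boundary_nb (s : {set V}) : seq {set V} :=
  [seq t : {set V} <- simplices | (t \subset s) && (#|t|.+1 == #|s|)%N].

(* upper-adjacent simplices sigma' (distinct from sigma, same dimension) sharing
   a coface delta of one more dimension; in a simplicial complex delta = s :|: t *)
Definition upper_nb (s : {set V}) : seq {set V} :=
  [seq t : {set V} <- simplices | [&& t != s, #|t| == #|s|, simplex (s :|: t)
                          & #|s :|: t| == #|s|.+1]%N].

Definition init_color (s : {set V}) : color :=
  GenTree.Node 0 [seq GenTree.Leaf n | n <- sort leq [seq c v | v <- enum s]].

Fixpoint swl_color (t : nat) (s : {set V}) : color :=
  match t with
  | 0 => init_color s
  | t'.+1 =>
      GenTree.Node 1
        [:: swl_color t' s;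
            GenTree.Node 2 (msort [seq swl_color t' b | b <- boundary_nb s]);
            GenTree.Node 3 (msort [seq GenTree.Node 4 [:: swl_color t' u;
                                                        swl_color t' (s :|: u)]
                                  | u <- upper_nb s])]
  end.

Definition swl_hist (t : nat) : seq color := [seq swl_color t s | s <- simplices].

Variable f : nat -> nat.

Definition fval (s : {set V}) : nat := (\max_(v in s) f (c v))%N.

(* K_t (Some t) and the whole complex K (None = infinity) *)
Definition filt (o : option nat) : pred {set V} :=
  [pred s | simplex s && (if o is Some t then (fval s <= t)%N else true)].

Local Notation N := #|{: {set V}}|.

Definition sofi (i : 'I_N) : {set V} := enum_val i.

(* row space = k-chains supported on the k-simplices of P (k+1 vertices) *)
Definition chains (P : pred {set V}) (k : nat) : 'M['F_2]_N :=
  diag_mx (\row_i (P (sofi i) && (#|sofi i| == k.+1)%N)%:R).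

(* boundary operator acting on row vectors: x *m bnd *)
Definition bnd : 'M['F_2]_N :=
  \matrix_(i, j) ([&& sofi j \subset sofi i,
                     #|sofi j|.+1 == #|sofi i| & sofi j != set0]%N)%:R.

Definition cycles (P : pred {set V}) (k : nat) : 'M['F_2]_N :=
  (chains P k :&: kermx bnd)%MS.

Definition bounds (P : pred {set V}) (k : nat) : 'M['F_2]_N :=
  chains P k.+1 *m bnd.

(* persistent Betti number beta_k^{a,b} = rank of H_k(K_a) -> H_k(K_b) *)
Definition pbetti (k a : nat) (b : option nat) : nat :=
  (\rank (cycles (filt (Some a)) k)
   - \rank (cycles (filt (Some a)) k :&: bounds (filt b) k)%MS)%N.

(* beta_k^{i-1,b}, with K_{-1} the empty complex *)
Definition pbetti_prev (k i : nat) (b : option nat) : nat :=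
  if i is i'.+1 then pbetti k i' b else 0%N.

(* persistence diagram in dimension k: multiplicity of the point
   (birth i, death j), j = None meaning death at infinity *)
Definition pdiagram (k i : nat) (j : option nat) : int :=
  match j with
  | Some j' =>
      if (i < j')%N then
        (pbetti k i (Some j'.-1))%:Z - (pbetti k i (Some j'))%:Z
        - (pbetti_prev k i (Some j'.-1))%:Z + (pbetti_prev k i (Some j'))%:Z
      else 0
  | None => (pbetti k i None)%:Z - (pbetti_prev k i None)%:Z
  end.

End Complex.

Definition colored_iso (V V' : finType) (e : rel V) (c : V -> nat)
    (e' : rel V') (c' : V' -> nat) : Prop :=
  exists phi : V -> V', [/\ bijective phi,
    forall s : {set V}, simplex e s = simplex e' (phi @: s)
    & forall v, c' (phi v) = c v].

Definition swl_indistinguishable (V V' : finType) (e : rel V) (c : V -> nat)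
    (e' : rel V') (c' : V' -> nat) : Prop :=
  forall t, perm_eq (swl_hist e c t) (swl_hist e' c' t).

Definition pd_differ (V V' : finType) (e : rel V) (c : V -> nat)
    (e' : rel V') (c' : V' -> nat) (f : nat -> nat) : Prop :=
  exists k i j, pdiagram e c f k i j != pdiagram e' c' f k i j.

(* Main.v *)
Require Import Defs.
From mathcomp Require Import all_boot all_order all_algebra ring.
Set Implicit Arguments. Unset Strict Implicit. Unset Printing Implicit Defensive.

Lemma msort_perm (a b : seq color) : perm_eq a b -> msort a = msort b.
Proof.
move=> h; apply/perm_sortP => //.
- by move=> x y; apply: leq_total.
- by move=> x y z; apply: leq_trans.
- by move=> x y /anti_leq; apply: (pcan_inj (@pickleK _)).
Qed.

Definition Bc (x : seq nat) : seq (seq nat) :=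
  if x is [:: r1; r2] then [:: [:: r1]; [:: r2]] else [::].
Definition Uc (x : seq nat) : seq (seq nat * seq nat) :=
  if x is [:: r] then [:: ([:: r.+1 %% 4], sort leq [:: r; r.+1 %% 4]);
                        ([:: (r + 3) %% 4], sort leq [:: r; (r + 3) %% 4])]
  else [::].
Fixpoint Fc (t : nat) (x : seq nat) : color :=
  match t with
  | 0 => GenTree.Node 0 [seq GenTree.Leaf n | n <- x]
  | t'.+1 => GenTree.Node 1
      [:: Fc t' x; GenTree.Node 2 (msort (map (Fc t') (Bc x)));
          GenTree.Node 3 (msort [seq GenTree.Node 4 [:: Fc t' q.1; Fc t' q.2] | q <- Uc x])]
  end.

Lemma sort2 (a b : nat) : sort leq [:: a; b] = if a <= b then [:: a; b] else [:: b; a].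
Proof. by rewrite /sort /=; case: leqP. Qed.

Lemma sub2_card1 (V : finType) (a b : V) (T : {set V}) :
  (T \subset [set a; b]) && (#|T| == 1) = (T == [set a]) || (T == [set b]).
Proof.
apply/idP/idP.
- case/andP=> hs /cards1P [x hx]; subst T; move: hs; rewrite sub1set !inE.
  by case/orP=> /eqP ->; rewrite eqxx ?orbT.
- by case/orP=> /eqP ->; rewrite cards1 eqxx andbT sub1set !inE eqxx ?orbT.
Qed.

Lemma set1_eqE (V : finType) (a b : V) : ([set a] == [set b]) = (a == b).
Proof. by apply/eqP/eqP=> [/set1_inj|->]. Qed.

Lemma clique_of (V : finType) (e : rel V) s x y :
  simplex e s -> x \in s -> y \in s -> x != y -> e x y.
Proof.
case/andP=> _ /forall_inP H hx hy; move: (H x hx) => /forall_inP /(_ y hy) /implyP.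
by apply.
Qed.

Section Gen.
Variables (V : finType) (s p : V -> V) (c : V -> nat).
Definition E : rel V := fun x y => (y == s x) || (x == s y).
Hypotheses (sK : cancel s p) (pK : cancel p s) (sF : forall x, s x != x)
  (s2F : forall x, s (s x) != x)
  (tri : forall x y z, E x y -> E y z -> E x z -> False)
  (cs : forall v, c (s v) = (c v).+1 %% 4) (cl : forall v, c v < 4).

Lemma vsF v : v != s v. Proof. by rewrite eq_sym sF. Qed.
Lemma vpF v : v != p v.
Proof. by have := sF (p v); rewrite pK. Qed.
Lemma spF v : s v != p v.
Proof. by apply/eqP=> h; move: (s2F v); rewrite h pK eqxx. Qed.

Lemma simplex1 v : simplex E [set v].
Proof.
rewrite /simplex /is_clique; apply/andP; split.
  by apply/set0Pn; exists v; rewrite inE.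
apply/forall_inP=> x /set1P ->; apply/forall_inP=> y /set1P ->; by rewrite eqxx.
Qed.

Lemma simplex2 v : simplex E [set v; s v].
Proof.
rewrite /simplex /is_clique; apply/andP; split.
  apply/set0Pn; exists v; rewrite !inE eqxx //.
apply/forall_inP=> x /set2P [] ->; apply/forall_inP=> y /set2P [] ->;
  by rewrite /E ?eqxx ?orbT ?implybT.
Qed.

Lemma clique2 t : simplex E t -> (exists v, t = [set v]) \/ (exists v, t = [set v; s v]).
Proof.
move=> ht; have /andP [ne _] := ht; case/set0Pn: ne => x hx.
have [sub|] := boolP (t \subset [set x]).
  left; exists x; apply/eqP; rewrite eqEsubset sub sub1set hx //.
case/subsetPn => y hy; rewrite inE => hyx.
have exy : E x y by apply: (clique_of ht); rewrite // eq_sym.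
have -> : t = [set x; y].
  apply/eqP; rewrite eqEsubset; apply/andP; split; last first.
    by apply/subsetP=> z /set2P [] ->.
  apply/subsetP=> z hz; rewrite !inE.
  case: (boolP (z == x)) => //= zx; case: (boolP (z == y)) => //= zy.
  exfalso; apply: (tri exy (clique_of ht hy hz _) (clique_of ht hx hz _)).
    by rewrite eq_sym. by rewrite eq_sym.
right; case/orP: exy => /eqP ->; first by exists x.
by exists y; rewrite setUC.
Qed.

Lemma card_simplex t : simplex E t -> #|t| <= 2.
Proof. by case/clique2=> [][v ->]; rewrite ?cards1 ?cards2 ?ltnS ?leq_b1. Qed.

Lemma mem_simplices t : (t \in simplices E) = simplex E t.
Proof. by rewrite mem_enum. Qed.

Lemma bnd1 v : boundary_nb E [set v] = [::].
Proof.
rewrite /boundary_nb (eq_in_filter (a2 := pred0)) ?filter_pred0 // => t.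
rewrite mem_simplices => /andP [tn _] /=.
by rewrite cards1 eqSS cards_eq0 (negbTE tn) andbF.
Qed.

Lemma bnd2 v : perm_eq (boundary_nb E [set v; s v]) [:: [set v]; [set s v]].
Proof.
apply: uniq_perm.
- by rewrite filter_uniq // enum_uniq.
- by rewrite /= inE set1_eqE vsF.
move=> t; rewrite mem_filter mem_simplices cards2 vsF !inE eqSS.
apply/idP/idP.
  by case/andP=> /andP [h1 h2] _; rewrite -sub2_card1 h1 h2.
move=> h; have := h; rewrite -sub2_card1 => /andP [-> ->] /=.
by case/orP: h => /eqP ->; rewrite simplex1.
Qed.

Lemma upp2 v : upper_nb E [set v; s v] = [::].
Proof.
rewrite /upper_nb (eq_in_filter (a2 := pred0)) ?filter_pred0 // => t _ /=.
rewrite cards2 vsF; apply/negP => /and4P [_ _ /card_simplex h /eqP h2].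
by rewrite h2 in h.
Qed.

Lemma upp1 v : perm_eq (upper_nb E [set v]) [:: [set s v]; [set p v]].
Proof.
apply: uniq_perm.
- by rewrite filter_uniq // enum_uniq.
- by rewrite /= inE set1_eqE spF.
move=> t; rewrite mem_filter mem_simplices !inE cards1.
apply/idP/idP.
  case/andP=> /and4P [tv /eqP t1 hs hc] _.
  have /cards1P [w tw] : #|t| == 1 by rewrite t1.
  move: tv hs; rewrite tw !set1_eqE => tv hs.
  have : E v w by apply: (clique_of hs); rewrite ?inE ?eqxx ?orbT // eq_sym.
  case/orP=> /eqP h; first by rewrite h eqxx.
  by rewrite h sK eqxx orbT.
case/orP=> /eqP ->; rewrite simplex1 cards1 eqxx set1_eqE ?andbT /=.
  by rewrite sF simplex2 cards2 vsF.
rewrite eq_sym vpF /= setUC -{2}(pK v) simplex2 /= cards2 (eq_sym (p v)) vpF //.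
Qed.

Definition g (t : {set V}) : seq nat := sort leq [seq c x | x <- enum t].

Lemma g1 v : g [set v] = [:: c v].
Proof. by rewrite /g enum_set1. Qed.

Lemma g2 a b : a != b -> g [set a; b] = sort leq [:: c a; c b].
Proof.
move=> ab; apply/perm_sortP.
- by move=> x y; apply: leq_total.
- by move=> x y z; apply: leq_trans.
- by move=> x y /anti_leq.
apply: (@perm_map _ _ c _ [:: a; b]); apply: uniq_perm; rewrite ?enum_uniq //= ?inE ?ab //.
by move=> x; rewrite mem_enum !inE.
Qed.

Lemma cp v : c (p v) = (c v + 3) %% 4.
Proof.
rewrite -{2}(pK v) cs; move: (cl (p v)).
by case: (c (p v)) => [|[|[|[|r]]]].
Qed.

Lemma KB t : simplex E t -> perm_eq (map g (boundary_nb E t)) (Bc (g t)).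
Proof.
case/clique2=> [][v ->]; first by rewrite bnd1 g1.
apply: (perm_trans (perm_map g (bnd2 v))); rewrite /= g2 ?vsF // !g1 sort2.
by case: leqP => //= _; apply/permP => q /=; rewrite !addn0 addnC.
Qed.

Lemma KU t : simplex E t ->
  perm_eq [seq (g u, g (t :|: u)) | u <- upper_nb E t] (Uc (g t)).
Proof.
case/clique2=> [][v ->].
  apply: (perm_trans (perm_map _ (upp1 v))).
  by rewrite /= !g1 /= g2 ?vsF // g2 ?vpF // cs cp.
by rewrite upp2 g2 ?vsF // sort2; case: leqP.
Qed.

Lemma factor t u : simplex E u -> swl_color E c t u = Fc t (g u).
Proof.
elim: t u => [|t IH] u hu //=.
rewrite IH //; congr (GenTree.Node 1 [:: _; GenTree.Node 2 _; GenTree.Node 3 _]).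
  have -> : map (swl_color E c t) (boundary_nb E u) = map (Fc t \o g) (boundary_nb E u).
    by apply/eq_in_map => b; rewrite mem_filter mem_simplices => /andP [_ hb] /=; rewrite IH.
  by rewrite map_comp; apply: msort_perm; apply: perm_map; apply: KB.
have -> : [seq GenTree.Node 4 [:: swl_color E c t w; swl_color E c t (u :|: w)] | w <- upper_nb E u]
   = map ((fun q => GenTree.Node 4 [:: Fc t q.1; Fc t q.2]) \o
                           (fun w => (g w, g (u :|: w)))) (upper_nb E u).
  apply/eq_in_map => w; rewrite mem_filter mem_simplices => /andP [/and4P [_ _ h _] hw] /=.
  by rewrite !IH.
by rewrite map_comp; apply: msort_perm; apply: perm_map; apply: KU.
Qed.

Lemma inj2 : injective (fun v => [set v; s v]).
Proof.
move=> v w /= h.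
have : v \in [set w; s w] by rewrite -h !inE eqxx.
case/set2P => // hv.
have : s v \in [set w; s w] by rewrite -h !inE eqxx orbT.
case/set2P => hw; last by apply: (can_inj sK).
by move: (s2F w); rewrite -hv hw eqxx.
Qed.

Lemma simplices_perm : perm_eq (simplices E)
   ([seq [set v] | v <- enum V] ++ [seq [set v; s v] | v <- enum V]).
Proof.
apply: uniq_perm; first by rewrite enum_uniq.
  rewrite cat_uniq (map_inj_uniq set1_inj) (map_inj_uniq inj2) enum_uniq /= andbT.
  apply/hasPn => x /mapP [v _ ->]; apply/mapP => [[w _ h]].
  by move: (cards2 v (s v)); rewrite h cards1 vsF.
move=> t; rewrite mem_simplices mem_cat; apply/idP/idP.
  case/clique2=> [][v ->]; apply/orP; [left|right];
    by apply/mapP; exists v; rewrite ?mem_enum.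
by case/orP=> /mapP [v _ ->]; rewrite ?simplex1 ?simplex2.
Qed.

Definition Lc : seq (seq nat) :=
  [seq [:: c v] | v <- enum V] ++ [seq sort leq [:: c v; (c v).+1 %% 4] | v <- enum V].

Lemma hist_perm t : perm_eq (swl_hist E c t) (map (Fc t) Lc).
Proof.
have -> : swl_hist E c t = map (Fc t \o g) (simplices E).
  by apply/eq_in_map => u; rewrite mem_simplices => hu /=; rewrite factor.
rewrite map_comp; apply: perm_map.
apply: (perm_trans (perm_map g simplices_perm)).
rewrite map_cat /Lc.
have -> : map g [seq [set v] | v <- enum V] = [seq [:: c v] | v <- enum V].
  by rewrite -map_comp; apply: eq_map => v; rewrite /= g1.
have -> : map g [seq [set v; s v] | v <- enum V] =
          [seq sort leq [:: c v; (c v).+1 %% 4] | v <- enum V].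
  by rewrite -map_comp; apply: eq_map => v; rewrite /= g2 ?vsF // cs.
by [].
Qed.

End Gen.

Definition S8 n := n.+1 %% 8.
Definition P8 n := (n + 7) %% 8.
Definition S2 n := n %/ 4 * 4 + n.+1 %% 4.
Definition P2 n := n %/ 4 * 4 + (n + 3) %% 4.
Definition mk (F : nat -> nat) (x : 'I_8) : 'I_8 := inord (F x).
Definition c8 (x : 'I_8) : nat := x %% 4.
Definition EN (S : nat -> nat) (a b : nat) := (b == S a) || (a == S b).

Lemma I8P (Q : nat -> bool) : all Q (iota 0 8) -> forall x : 'I_8, Q x.
Proof. by move/allP=> H x; apply: H; rewrite mem_iota ltn_ord. Qed.

Lemma mkE F x : all (fun n => F n < 8) (iota 0 8) -> (mk F x : nat) = F x.
Proof. by move=> H; rewrite /mk inordK //; apply: (I8P H). Qed.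

Lemma EE S x y : all (fun n => S n < 8) (iota 0 8) -> E (mk S) x y = EN S x y.
Proof. by move=> H; rewrite /E /EN -!val_eqE /= !mkE. Qed.

Lemma inst (S P : nat -> nat) :
  all (fun n => S n < 8) (iota 0 8) ->
  all (fun n => P n < 8) (iota 0 8) ->
  all (fun n => [&& P (S n) == n, S (P n) == n, S n != n, S (S n) != n
                  & S n %% 4 == (n %% 4).+1 %% 4]) (iota 0 8) ->
  all (fun a => all (fun b => all (fun d => ~~ [&& EN S a b, EN S b d & EN S a d])
        (iota 0 8)) (iota 0 8)) (iota 0 8) ->
  [/\ cancel (mk S) (mk P) /\ cancel (mk P) (mk S), (forall x, mk S x != x),
      (forall x, mk S (mk S x) != x),
      (forall x y z, E (mk S) x y -> E (mk S) y z -> E (mk S) x z -> False)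
    & forall v, c8 (mk S v) = (c8 v).+1 %% 4].
Proof.
move=> hS hP /I8P H /I8P T; split; first split.
- by move=> x; apply/val_inj => /=; rewrite !mkE //; case/and5P: (H x) => /eqP.
- by move=> x; apply/val_inj => /=; rewrite !mkE //; case/and5P: (H x) => _ /eqP.
- by move=> x; rewrite -val_eqE /= mkE //; case/and5P: (H x).
- by move=> x; rewrite -val_eqE /= !mkE //; case/and5P: (H x).
- move=> x y z; rewrite !EE // => h1 h2 h3.
  by have := I8P (I8P (T x) y) z; rewrite h1 h2 h3.
- by move=> v; rewrite /c8 mkE //; case/and5P: (H v) => _ _ _ _ /eqP.
Qed.

Definition inst8 := @inst S8 P8 isT isT isT isT.
Definition inst2 := @inst S2 P2 isT isT isT isT.

Lemma c8lt v : c8 v < 4. Proof. exact: ltn_pmod. Qed.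

Lemma swl_ind : swl_indistinguishable (E (mk S8)) c8 (E (mk S2)) c8.
Proof.
move=> t.
case: inst8 => [[a1 b1] c1 d1 e1 f1]; case: inst2 => [[a2 b2] c2 d2 e2 f2].
have H1 := hist_perm a1 b1 c1 d1 e1 f1 c8lt t.
have H2 := hist_perm a2 b2 c2 d2 e2 f2 c8lt t.
by apply: (perm_trans H1); rewrite perm_sym.
Qed.

Lemma simplex_pairE (V : finType) (e : rel V) (sym : symmetric e) x y :
  x != y -> simplex e [set x; y] = e x y.
Proof.
move=> xy; apply/idP/idP.
  by move=> h; apply: (clique_of h) => //; rewrite !inE eqxx ?orbT.
move=> exy; rewrite /simplex /is_clique; apply/andP; split.
  apply/set0Pn; exists x; rewrite !inE eqxx //.
apply/forall_inP=> u /set2P [] ->; apply/forall_inP=> w /set2P [] ->;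
  by rewrite ?eqxx ?(sym y x) ?exy ?implybT.
Qed.

Lemma symE S : symmetric (E (mk S)).
Proof. by move=> x y; rewrite /E orbC. Qed.

Lemma noniso : ~ colored_iso (E (mk S8)) c8 (E (mk S2)) c8.
Proof.
case=> phi [bij hs _].
have einj := bij_inj bij.
have edge : forall x y, E (mk S8) x y -> x != y -> (phi x : nat) %/ 4 = (phi y : nat) %/ 4.
  move=> x y exy nxy.
  have pxy : phi x != phi y by apply: contra nxy => /eqP /einj ->.
  have := hs [set x; y]; rewrite imsetU1 imset_set1.
  rewrite (simplex_pairE (symE S8) nxy) (simplex_pairE (symE S2) pxy).
  rewrite exy EE // => /esym h.
  have := I8P (I8P (isT : all (fun a => all (fun b => EN S2 a b ==> (a %/ 4 == b %/ 4))
            (iota 0 8)) (iota 0 8)) (phi x)) (phi y).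
  by rewrite h => /eqP.
set b := (phi (inord 0) : nat) %/ 4.
have blk : forall n, n < 8 -> (phi (inord n) : nat) %/ 4 = b.
  elim=> [//|n IH] hn.
  have hn' : n < 8 by apply: ltnW.
  have -> : (inord n.+1 : 'I_8) = mk S8 (inord n).
    by apply/val_inj => /=; rewrite mkE // !inordK // /S8 modn_small.
  case: inst8 => _ c1 _ _ _.
  by rewrite -(edge (inord n)) ?IH // ?(eq_sym (inord n)) ?c1 // /E eqxx.
have all_b : forall i : 'I_8, (phi i : nat) %/ 4 = b.
  by move=> i; rewrite -(inord_val i) blk.
case: bij => psi _ phipsi.
have bl : b < 2 by rewrite /b ltn_divLR // (ltn_ord (phi (inord 0))).
set y0 : 'I_8 := if b == 0 then inord 4 else inord 0.
have := all_b (psi y0); rewrite phipsi /y0.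
by case: (b) bl => [|[|]] //=; rewrite inordK.
Qed.
Import GRing.Theory.

Lemma filt0G (V : finType) (s : V -> V) (c : V -> nat) :
  (forall x y z, E s x y -> E s y z -> E s x z -> False) ->
  (forall v, c (s v) = (c v).+1 %% 4) ->
  forall t, filt (E s) c id (Some 0) t = [exists v, (t == [set v]) && (c v == 0)].
Proof.
move=> tri cs t; rewrite /filt /= /fval; apply/idP/idP.
  case/andP=> ht hm; case: (clique2 tri ht) => [][v tv]; subst t; move/bigmax_leqP: hm => hm.
    apply/existsP; exists v; rewrite eqxx /= -leqn0.
    by apply: hm; rewrite inE.
  have h1 : c v <= 0 by apply: hm; rewrite !inE eqxx.
  have := hm (s v); rewrite !inE eqxx orbT cs => /(_ isT).
  by move: h1; rewrite leqn0 => /eqP ->.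
case/existsP=> v /andP [/eqP -> /eqP cv]; rewrite simplex1 /=.
by apply/bigmax_leqP => u; rewrite inE => /eqP ->; rewrite cv.
Qed.

Local Open Scope ring_scope.

Lemma F2xx (x : 'F_2) : x + x = 0.
Proof. by rewrite -mulr2n -mulr_natr (pcharf0 (pchar_Fp (isT : prime 2))) mulr0. Qed.

Lemma chains_ext (V : finType) (P1 P2 : pred {set V}) k :
  P1 =1 P2 -> chains P1 k = chains P2 k.
Proof. by move=> H; rewrite /chains; congr diag_mx; apply/rowP => i; rewrite !mxE H. Qed.

Lemma eqrank (V : finType) (j : 'I_#|{: {set V}}|) (A : {set V}) :
  (j == enum_rank A) = (sofi j == A).
Proof.
apply/eqP/eqP => [-> | <-]; first exact: enum_rankK.
by rewrite /sofi enum_valK.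
Qed.

Lemma sum_sets (V : finType) (G : 'I_#|{: {set V}}| -> 'F_2) :
  \sum_j G j = \sum_(T : {set V}) G (enum_rank T).
Proof. by rewrite (reindex enum_rank) //; apply: onW_bij; apply: enum_rank_bij. Qed.

Lemma sum_delta (V : finType) (A : {set V}) (G : {set V} -> 'F_2) :
  \sum_(T : {set V}) (T == A)%:R * G T = G A.
Proof.
rewrite (bigD1 A) //= eqxx mul1r big1 ?addr0 // => T /negbTE ->.
by rewrite mul0r.
Qed.

Lemma sum_two (V : finType) (A B : {set V}) (G : {set V} -> 'F_2) :
  A != B -> (forall T, T != A -> T != B -> G T = 0) ->
  \sum_(T : {set V}) G T = G A + G B.
Proof.
move=> AB H; rewrite (bigD1 A) //= (bigD1 B) 1?eq_sym //= big1 ?addr0 //.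
by move=> T /andP [h1 h2]; apply: H.
Qed.

Lemma bnd_single (V : finType) i j : #|sofi i| = 1%N -> bnd V i j = 0.
Proof.
move=> h; rewrite mxE h eqSS cards_eq0.
by case: (_ == set0); rewrite ?andbF.
Qed.

Lemma bnd_edge (V : finType) (a b : V) i j : a != b -> sofi i = [set a; b] ->
  bnd V i j = (sofi j == [set a])%:R + (sofi j == [set b])%:R.
Proof.
move=> ab hi; rewrite mxE hi cards2 ab eqSS.
set T := sofi j.
have -> : (#|T| == 1%N) && (T != set0) = (#|T| == 1%N).
  case/boolP: (#|T| == 1%N) => //= /cards1P [x ->].
  by apply/set0Pn; exists x; rewrite inE.
rewrite sub2_card1.
case: (T =P [set a]) => [->|_] /=; first by rewrite set1_eqE (negbTE ab) addr0.
by rewrite add0r.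
Qed.

Definition v0 : 'I_8 := inord 0.
Definition v4 : 'I_8 := inord 4.
Definition Q8 : pred {set 'I_8} := fun T => [exists v, (T == [set v]) && (c8 v == 0%N)].
Notation NN := #|{: {set 'I_8}}|.
Notation ev X := (delta_mx 0 (enum_rank [set X]) : 'rV['F_2]_NN).
Definition D0 : 'M['F_2]_NN := chains Q8 0.
Definition Z : 'M['F_2]_NN := (D0 :&: kermx (bnd 'I_8))%MS.
Definition e8 := E (mk S8).
Definition e2 := E (mk S2).
Definition B8 : 'M['F_2]_NN := bounds (filt e8 c8 id None) 0.
Definition B2 : 'M['F_2]_NN := bounds (filt e2 c8 id None) 0.

Lemma cyc8 : cycles (filt e8 c8 id (Some 0%N)) 0 = Z.
Proof.
case: inst8 => _ _ _ tri cs.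
by rewrite /cycles (chains_ext _ (filt0G tri cs)).
Qed.

Lemma cyc2 : cycles (filt e2 c8 id (Some 0%N)) 0 = Z.
Proof.
case: inst2 => _ _ _ tri cs.
by rewrite /cycles (chains_ext _ (filt0G tri cs)).
Qed.

Lemma Q8P T : Q8 T -> T = [set v0] \/ T = [set v4].
Proof.
case/existsP => v /andP [/eqP -> hc]; rewrite /c8 in hc.
have := I8P (isT : all (fun n => (n %% 4 == 0)%N ==> (n == 0)%N || (n == 4)%N) (iota 0 8)) v.
rewrite hc /= => /orP [] /eqP h; [left|right]; congr [set _];
  by apply/val_inj; rewrite /= h inordK.
Qed.

Lemma Q8v (X : 'I_8) : c8 X = 0%N -> Q8 [set X].
Proof. by move=> h; apply/existsP; exists X; rewrite eqxx h. Qed.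

Lemma c8v0 : c8 v0 = 0%N. Proof. by rewrite /c8 /v0 inordK. Qed.
Lemma c8v4 : c8 v4 = 0%N. Proof. by rewrite /c8 /v4 inordK. Qed.

Lemma e_sub X : Q8 [set X] -> (ev X <= D0)%MS.
Proof.
move=> hX.
have h : row (enum_rank [set X]) D0 = ev X.
  by rewrite row_diag_mx mxE /sofi enum_rankK cards1 hX eqxx scale1r.
by rewrite -h row_sub.
Qed.

Lemma e_ker X : (ev X <= kermx (bnd 'I_8))%MS.
Proof.
rewrite sub_kermx -rowE; apply/eqP/rowP => j.
by rewrite mxE bnd_single ?mxE // /sofi enum_rankK cards1.
Qed.

Lemma rowB (e : rel 'I_8) sg : simplex e sg -> #|sg| = 2%N ->
  row (enum_rank sg) (bounds (filt e c8 id None) 0) = row (enum_rank sg) (bnd 'I_8).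
Proof.
move=> hs hc.
by rewrite /bounds row_mul row_diag_mx mxE /sofi enum_rankK /filt /= hs hc eqxx scale1r -rowE.
Qed.

Lemma S8w k : (k < 7)%N -> mk S8 (inord k) = inord k.+1.
Proof. by move=> hk; apply/val_inj => /=; rewrite mkE // (@inordK 7 k (ltnW hk)) (@inordK 7 k.+1 hk) /S8 modn_small. Qed.

Lemma edge_facts k : (k < 7)%N ->
  [/\ simplex e8 [set inord k; inord k.+1], #|[set (inord k : 'I_8); inord k.+1]| = 2%N
    & (inord k : 'I_8) != inord k.+1].
Proof.
move=> hk.
have ne : (inord k : 'I_8) != inord k.+1.
  by rewrite -val_eqE /= (@inordK 7 k (ltnW hk)) (@inordK 7 k.+1 hk) (ltn_eqF (ltnSn k)).
split => //; last by rewrite cards2 ne.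
by rewrite -S8w // /e8 simplex2.
Qed.

Definition vv : 'rV['F_2]_NN := ev v0 + ev v4.

Lemma rowedge k : (k < 7)%N -> row (enum_rank [set inord k; inord k.+1]) (bnd 'I_8) =
  \row_j ((sofi j == [set inord k])%:R + (sofi j == [set inord k.+1])%:R).
Proof.
move=> hk; case: (edge_facts hk) => _ _ ne.
apply/rowP => j; rewrite mxE (bnd_edge _ ne) ?mxE //.
by rewrite /sofi enum_rankK.
Qed.

Lemma vv_eq : vv = row (enum_rank [set inord 0; inord 1]) (bnd 'I_8)
                 + row (enum_rank [set inord 1; inord 2]) (bnd 'I_8)
                 + row (enum_rank [set inord 2; inord 3]) (bnd 'I_8)
                 + row (enum_rank [set inord 3; inord 4]) (bnd 'I_8).
Proof.
rewrite !rowedge //; apply/rowP => j; rewrite !mxE /= !eqrank.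
set t0 := (_ == [set inord 0])%:R; set t1 := (_ == [set inord 1])%:R.
set t2 := (_ == [set inord 2])%:R; set t3 := (_ == [set inord 3])%:R.
set t4 := (_ == [set inord 4])%:R.
have -> : (t0 + t1) + (t1 + t2) + (t2 + t3) + (t3 + t4) =
          t0 + t4 + (t1 + t1) + (t2 + t2) + (t3 + t3) by ring.
by rewrite !F2xx !addr0.
Qed.

Lemma vv_le : (vv <= Z :&: B8)%MS.
Proof.
rewrite !sub_capmx; apply/andP; split; first apply/andP; first split.
- by apply: addmx_sub; apply: e_sub; apply: Q8v; rewrite ?c8v0 ?c8v4.
- by apply: addmx_sub; apply: e_ker.
rewrite vv_eq.
have H : forall k, (k < 7)%N -> (row (enum_rank [set inord k; inord k.+1]) (bnd 'I_8) <= B8)%MS.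
  move=> k hk; case: (edge_facts hk) => h1 h2 _.
  by rewrite -(rowB h1 h2) row_sub.
by rewrite !addmx_sub ?H.
Qed.

Lemma vv_neq0 : vv != 0.
Proof.
apply/eqP => /rowP /(_ (enum_rank [set v0])); rewrite !mxE eqxx /= !eqrank /sofi !enum_rankK.
rewrite eqxx set1_eqE.
have -> : (v0 == v4) = false by rewrite -val_eqE /= !inordK.
by rewrite addr0 => /eqP; rewrite oner_eq0.
Qed.

Definition wL (L : {set 'I_8}) : 'cV['F_2]_NN := \col_j (sofi j \subset L)%:R.

Lemma BeW (L : {set 'I_8}) : (forall a : 'I_8, (mk S2 a \in L) = (a \in L)) -> B2 *m wL L = 0.
Proof.
move=> HL; rewrite /B2 /bounds -mulmxA.
set y := bnd 'I_8 *m wL L.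
rewrite mul_diag_mx; apply/matrixP => i k; rewrite !mxE.
case/boolP: (filt e2 c8 id None (sofi i) && (#|sofi i| == 2%N)); last by rewrite mul0r.
case/andP => /andP [hs _] hc; rewrite mul1r.
case: inst2 => [[sK pK] sF _ tri _].
case: (clique2 tri hs) => [][a ha]; first by rewrite ha cards1 in hc.
have ne : a != mk S2 a by rewrite eq_sym sF.
rewrite sum_sets.
transitivity (\sum_(T : {set 'I_8}) ((T == [set a])%:R * (T \subset L)%:R
                  + (T == [set mk S2 a])%:R * (T \subset L)%:R : 'F_2)).
  apply: eq_bigr => T _; rewrite (bnd_edge _ ne ha) mxE /sofi enum_rankK mulrDl //.
by rewrite big_split /= !sum_delta !sub1set HL F2xx.
Qed.

Lemma key2 (x : 'rV['F_2]_NN) : (x <= D0)%MS -> (x <= B2)%MS -> x = 0.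
Proof.
move=> /submxP [z ->] /submxP [y hy].
have Xe : forall j, (z *m D0) 0 j = z 0 j * (Q8 (sofi j) && (#|sofi j| == 1%N))%:R.
  by move=> j; rewrite mul_mx_diag !mxE.
have supp : forall T, T != [set v0] -> T != [set v4] -> (z *m D0) 0 (enum_rank T) = 0.
  move=> T h0 h4; rewrite Xe /sofi enum_rankK.
  case/boolP: (Q8 T) => [/Q8P [] /eqP|]; [by rewrite (negbTE h0) | by rewrite (negbTE h4) |].
  by rewrite /= mulr0.
have lin : forall L : {set 'I_8}, (forall a, (mk S2 a \in L) = (a \in L)) ->
  (z *m D0) 0 (enum_rank [set v0]) * ([set v0] \subset L)%:R +
  (z *m D0) 0 (enum_rank [set v4]) * ([set v4] \subset L)%:R = 0.
  move=> L HL.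
  have h : (z *m D0) *m wL L = 0 by rewrite hy -mulmxA BeW // mulmx0.
  move/matrixP: h => /(_ 0 0); rewrite [LHS]mxE [RHS]mxE sum_sets.
  have v04 : [set v0] != [set v4] by rewrite set1_eqE -val_eqE /= !inordK.
  rewrite (sum_two v04); last by move=> T h0 h4; rewrite supp // mul0r.
  by rewrite !mxE /sofi !enum_rankK.
have HL1 : forall a, (mk S2 a \in [set b : 'I_8 | (b < 4)%N]) = (a \in [set b : 'I_8 | (b < 4)%N]).
  move=> a; rewrite !inE mkE //.
  by have /eqP := I8P (isT : all (fun n => (S2 n < 4)%N == (n < 4)%N) (iota 0 8)) a.
have HL2 : forall a, (mk S2 a \in [set b : 'I_8 | (4 <= b)%N]) = (a \in [set b : 'I_8 | (4 <= b)%N]).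
  move=> a; rewrite !inE mkE //.
  by have /eqP := I8P (isT : all (fun n => (4 <= S2 n)%N == (4 <= n)%N) (iota 0 8)) a.
have x0 := lin _ HL1; have x4 := lin _ HL2.
rewrite !sub1set !inE /v0 /v4 !inordK //= mulr1 mulr0 addr0 in x0.
rewrite !sub1set !inE /v0 /v4 !inordK //= mulr1 mulr0 add0r in x4.
apply/rowP => j; rewrite [RHS]mxE -(enum_valK j).
set T := enum_val j.
case: (T =P [set v0]) => [->|h0] //.
case: (T =P [set v4]) => [->|h4] //.
by rewrite supp //; apply/eqP.
Qed.

Lemma Z2 : \rank (Z :&: B2)%MS = 0%N.
Proof.
apply/eqP; rewrite mxrank_eq0 -submx0; apply/row_subP => i.
rewrite (key2 (x := row i (Z :&: B2)%MS)) ?sub0mx //.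
  apply: (submx_trans (row_sub _ _)); apply: (submx_trans (capmxSl _ _)).
  exact: capmxSl.
apply: (submx_trans (row_sub _ _)); exact: capmxSr.
Qed.

Lemma Z8 : (1 <= \rank (Z :&: B8)%MS <= \rank Z)%N.
Proof.
apply/andP; split; last exact: mxrankS (capmxSl _ _).
by have := mxrankS vv_le; rewrite rank_rV vv_neq0.
Qed.

Lemma symg S : all (fun n => S n < 8)%N (iota 0 8) -> (forall x : 'I_8, mk S x != x) ->
  simple_graph (E (mk S)).
Proof.
move=> _ sF; split; first exact: symE.
by move=> x; rewrite /E orbb eq_sym (negbTE (sF x)).
Qed.

Theorem proposition1 :
  exists (V V' : finType) (e : rel V) (e' : rel V') (c : V -> nat) (c' : V' -> nat),
    [/\ simple_graph e, simple_graph e',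
        ~ colored_iso e c e' c',
        swl_indistinguishable e c e' c'
      & exists f : nat -> nat, pd_differ e c e' c' f].
Proof.
exists 'I_8, 'I_8, e8, e2, c8, c8.
case: inst8 => _ sF8 _ _ _; case: inst2 => _ sF2 _ _ _.
split.
- exact: symg.
- exact: symg.
- exact: noniso.
- exact: swl_ind.
exists id, 0%N, 0%N, None.
rewrite /pdiagram /pbetti_prev /pbetti cyc8 cyc2 -/B8 -/B2 Z2 subn0 !subr0.
move: Z8 => /andP [h1 h2].
apply/negP => /eqP [] h.
move: (\rank (Z :&: B8)%MS) (\rank Z) h1 h2 h => r a h1 h2 h.
have : (a - r + r = a + r)%N by rewrite h.
rewrite subnK // => /eqP; rewrite -{1}[a]addn0 eqn_add2l eq_sym => /eqP r0.
by rewrite r0 in h1.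
Qed.
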